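(* Let $(Y^*,Y,X)$ be random variables with $Y^*\in\{0,1\}$ (true, unobserved outcome), $Y\in\{0,1\}$ (observed, possibly misreported outcome) and $X=(\tilde X,Z)\in\mathcal X$, where $\tilde X\in\tilde{\mathcal X}$ and $Z$ takes values in a finite set $\mathcal Z=\{z_1,\dots,z_k\}$. Write $p(x)=\Pr(Y=1\mid X=x)$, $p^*(x)=\Pr(Y^*=1\mid X=x)$, $p(\tilde x,z)=p(x)$ for $x=(\tilde x,z)$, and $$\underline{p}_z(\tilde x)=\inf_{z\in\mathcal Z}p(\tilde x,z),\qquad \bar p_z(\tilde x)=\sup_{z\in\mathcal Z}p(\tilde x,z).$$ Assume: (i) (Exclusion) for every $x=(\tilde x,z)\in\mathcal X$ and $y\in\{0,1\}$, $\Pr(Y=1-y\mid Y^*=y,X=x)=\Pr(Y=1-y\mid Y^*=y,\tilde X=\tilde x)$; (ii) (Degree of misreporting) for every $\tilde x\in\tilde{\mathcal X}$, $\Pr(Y=0\mid Y^*=1,\tilde x)+\Pr(Y=1\mid Y^*=0,\tilde x)\le 1$; (iii) (Boundary condition) for every $\tilde x\in\tilde{\mathcal X}$, $\bar p_z(\tilde x)>0$ and $\underline p_z(\tilde x)<1$. Then for every $x=(\tilde x,z)\in\mathcal X$, $p^*(x)\in[L_1(x),U_1(x)]$, where $$L_1(x)=\frac{p(x)-\underline p_z(\tilde x)}{1-\underline p_z(\tilde x)},\qquad U_1(x)=\frac{p(x)}{\bar p_z(\tilde x)},$$ and these bounds are sharp (no tighter bounds on $p^*(x)$ are implied by the assumptions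 and the distribution of the observed variables $(Y,X)$).
   Context: $Z$ is an instrument affecting the true outcome but not the misreporting probabilities $\Pr(Y=1-y\mid Y^*=y,\cdot)$. Conditioning on $\tilde x$ means conditioning on $\tilde X=\tilde x$. *)

(* Defs.v *)
From HB Require Import structures.
From mathcomp Require Import all_boot all_order all_algebra.
Set Implicit Arguments. Unset Strict Implicit. Unset Printing Implicit Defensive.
Import Order.TTheory GRing.Theory Num.Theory.
Local Open Scope ring_scope.

(* For a fixed value x~ of X~, the conditional joint law of
   (Y*, Y, Z) given X~ = x~ is a probability mass function on the finite
   set bool * bool * Z.  An outcome t = ((ystar, y), z):
     t.1.1 = Y*  (true = 1),  t.1.2 = Y,  t.2 = Z.
   Conditioning on X = (x~, z) is conditioning this law on Z = z. *)

Section Defs.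
Variables (R : realFieldType) (Z : finType).

Definition outcome := (bool * bool * Z)%type.
Definition law := outcome -> R.

Definition is_pmf (f : law) : Prop :=
  (forall t, 0 <= f t) /\ \sum_(t : outcome) f t = 1.

Definition Pr (f : law) (A : pred outcome) : R := \sum_(t : outcome | A t) f t.

(* elementary conditional probability Pr(A | B) = Pr(A,B)/Pr(B)
   (MathComp convention: equals 0 when Pr(B) = 0) *)
Definition cPr (f : law) (A B : pred outcome) : R :=
  Pr f [pred t | A t && B t] / Pr f B.

Definition evYs (b : bool) : pred outcome := [pred t | t.1.1 == b].
Definition evY  (b : bool) : pred outcome := [pred t | t.1.2 == b].
Definition evZ  (z : Z)    : pred outcome := [pred t | t.2 == z].
Definition evI (A B : pred outcome) : pred outcome := [pred t | A t && B t].

Definition in_supp (f : law) (z : Z) : Prop := 0 < Pr f (evZ z).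

Definition p (f : law) (z : Z) : R := cPr f (evY true) (evZ z).
Definition pstar (f : law) (z : Z) : R := cPr f (evYs true) (evZ z).

(* inf / sup over z of p(x~, z), z ranging over the support; since p takes
   values in [0,1], the neutral elements 1 (for min) and 0 (for max) do not
   affect the value on a nonempty support. *)
Definition p_low (f : law) : R := \big[Num.min/1]_(z : Z | 0 < Pr f (evZ z)) p f z.
Definition p_up  (f : law) : R := \big[Num.max/0]_(z : Z | 0 < Pr f (evZ z)) p f z.

Definition mis_x (f : law) (y : bool) (z : Z) : R :=
  cPr f (evY (~~ y)) (evI (evYs y) (evZ z)).
Definition mis (f : law) (y : bool) : R := cPr f (evY (~~ y)) (evYs y).

Definition exclusion (f : law) : Prop :=
  forall (z : Z) (y : bool), 0 < Pr f (evI (evYs y) (evZ z)) ->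
    mis_x f y z = mis f y.

Definition degree_misreport (f : law) : Prop := mis f true + mis f false <= 1.

Definition boundary (f : law) : Prop := 0 < p_up f /\ p_low f < 1.

Definition L1 (f : law) (z : Z) : R := (p f z - p_low f) / (1 - p_low f).
Definition U1 (f : law) (z : Z) : R := p f z / p_up f.

Definition same_observed (f g : law) : Prop :=
  forall (y : bool) (z : Z), Pr f (evI (evY y) (evZ z)) = Pr g (evI (evY y) (evZ z)).

End Defs.

(* a full model: a kernel x~ |-> law of (Y*,Y,Z) given X~ = x~,
   satisfying assumptions (i)-(iii) *)
Definition admissible (R : realFieldType) (Xt : Type) (Z : finType)
  (P : Xt -> law R Z) : Prop :=
  forall xt, [/\ is_pmf (P xt), exclusion (P xt), degree_misreport (P xt)
               & boundary (P xt)].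

(* Main.v *)
Require Import Defs.
From HB Require Import structures.
From mathcomp Require Import all_boot all_order all_algebra.
From mathcomp Require Import ring lra.
Import Order.TTheory GRing.Theory Num.Theory.
Local Open Scope ring_scope.

Section Aux.
Variables (R : realFieldType) (Z : finType).
Implicit Types (f g : law R Z).

Definition w f (ys y : bool) (z : Z) : R := f ((ys, y), z).

Lemma sum_bb (G : bool * bool -> R) :
  \sum_(u : bool * bool) G u = G (true,true) + G (true,false) + G (false,true) + G (false,false).
Proof.
rewrite (eq_bigr (fun u => G (u.1, u.2))); last by case.
rewrite -(pair_bigA _ (fun a b => G (a, b))) /=.
by rewrite !big_bool /= addrA.
Qed.

Lemma Pr_z f (A : pred (outcome Z)) (B : pred (bool * bool)) z :
  (forall u z', A (u, z') = B u && (z' == z)) ->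
  Pr f A = \sum_(u : bool * bool) (if B u then f (u, z) else 0).
Proof.
move=> HA; rewrite /Pr.
have E : \sum_(t | A t) f t = \sum_(p | B p.1 && (p.2 == z)) f (p.1, p.2).
  by apply: eq_big => [[u z']|[u z'] _] //=; rewrite HA.
transitivity (\sum_(u | B u) \sum_(z' | z' == z) f (u, z')).
  rewrite E; symmetry; exact: (pair_big_dep B (fun _ z' => z' == z) (fun u z' => f (u, z'))).
rewrite big_mkcond; apply: eq_bigr => u _; case: (B u) => //.
by rewrite big_pred1_eq.
Qed.

Lemma Pr_all f (A : pred (outcome Z)) (B : pred (bool * bool)) :
  (forall u z', A (u, z') = B u) ->
  Pr f A = \sum_z' \sum_(u : bool * bool) (if B u then f (u, z') else 0).
Proof.
move=> HA; rewrite /Pr.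
have E : \sum_(t | A t) f t = \sum_(p | B p.1 && true) f (p.1, p.2).
  by apply: eq_big => [[u z']|[u z'] _] //=; rewrite HA andbT.
transitivity (\sum_(u | B u) \sum_(z' | true) f (u, z')).
  rewrite E; symmetry; exact: (pair_big_dep B (fun _ z' => true) (fun u z' => f (u, z'))).
rewrite exchange_big /=; apply: eq_bigr => z' _.
by rewrite big_mkcond.
Qed.

Lemma sum_outcome f : \sum_(t : outcome Z) f t =
  \sum_z (w f true true z + w f true false z + w f false true z + w f false false z).
Proof.
have := @Pr_all f xpredT xpredT (fun _ _ => erefl).
rewrite /Pr => ->; apply: eq_bigr => z _; by rewrite sum_bb.
Qed.

Lemma PrZ f z : Pr f (evZ z) =
  w f true true z + w f true false z + w f false true z + w f false false z.
Proof. by rewrite (@Pr_z f _ xpredT z) // sum_bb. Qed.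

Lemma PrYZ f y z : Pr f (evI (evY y) (evZ z)) = w f true y z + w f false y z.
Proof.
rewrite (@Pr_z f _ [pred u | u.2 == y] z) // sum_bb /=.
by case: y => /=; rewrite ?addr0 ?add0r.
Qed.

Lemma PrYsZ f ys z : Pr f (evI (evYs ys) (evZ z)) = w f ys true z + w f ys false z.
Proof.
rewrite (@Pr_z f _ [pred u | u.1 == ys] z) // sum_bb /=.
by case: ys => /=; rewrite ?addr0 ?add0r.
Qed.

Lemma PrmisZ f ys z :
  Pr f [pred t | evY (~~ ys) t && evI (evYs ys) (evZ z) t] = w f ys (~~ ys) z.
Proof.
rewrite (@Pr_z f _ [pred u | (u.2 == ~~ ys) && (u.1 == ys)] z); last first.
  by move=> u z'; rewrite /= andbA.
by rewrite sum_bb /=; case: ys => /=; rewrite ?addr0 ?add0r.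
Qed.

Lemma PrstarZ f z :
  Pr f [pred t | evYs true t && evZ z t] = w f true true z + w f true false z.
Proof. by have := PrYsZ f true z. Qed.

Lemma PrpZ f z :
  Pr f [pred t | evY true t && evZ z t] = w f true true z + w f false true z.
Proof. by have := PrYZ f true z. Qed.

Lemma Prmis f ys :
  Pr f [pred t | evY (~~ ys) t && evYs ys t] = \sum_z w f ys (~~ ys) z.
Proof.
rewrite (@Pr_all f _ [pred u | (u.2 == ~~ ys) && (u.1 == ys)]) //.
apply: eq_bigr => z _; rewrite sum_bb /=.
by case: ys => /=; rewrite ?addr0 ?add0r.
Qed.

Lemma PrYs f ys : Pr f (evYs ys) = \sum_z (w f ys true z + w f ys false z).
Proof.
rewrite (@Pr_all f _ [pred u | u.1 == ys]) //.
apply: eq_bigr => z _; rewrite sum_bb /=.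
by case: ys => /=; rewrite ?addr0 ?add0r.
Qed.


Lemma divr_le1 (x y : R) : 0 <= x -> x <= y -> x / y <= 1.
Proof.
move=> x0 xy; have [->|y0] := eqVneq y 0; first by rewrite invr0 mulr0.
have yp : 0 < y by rewrite lt_neqAle eq_sym y0 (le_trans x0 xy).
by rewrite ler_pdivrMr // mul1r.
Qed.

Lemma Pr_ge0 f A : (forall t, 0 <= f t) -> 0 <= Pr f A.
Proof. by move=> f0; apply: sumr_ge0. Qed.

Lemma PrI_le f (A B : pred (outcome Z)) : (forall t, 0 <= f t) ->
  Pr f [pred t | A t && B t] <= Pr f B.
Proof.
move=> f0; rewrite /Pr [X in X <= _]big_mkcond [X in _ <= X]big_mkcond.
apply: ler_sum => t _ /=; case: (A t); case: (B t) => //=.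
Qed.

Lemma cPr_01 f A B : (forall t, 0 <= f t) -> 0 <= cPr f A B <= 1.
Proof.
move=> f0; rewrite /cPr; apply/andP; split.
  by apply: divr_ge0; apply: Pr_ge0.
by apply: divr_le1; [apply: Pr_ge0 | apply: PrI_le].
Qed.

Lemma pE f z : p f z = (w f true true z + w f false true z) / Pr f (evZ z).
Proof. by rewrite /p /cPr PrpZ. Qed.

Lemma pstarE f z : pstar f z = (w f true true z + w f true false z) / Pr f (evZ z).
Proof. by rewrite /pstar /cPr PrstarZ. Qed.

Lemma mis_xE f y z : mis_x f y z = w f y (~~ y) z / (w f y true z + w f y false z).
Proof. by rewrite /mis_x /cPr PrmisZ PrYsZ. Qed.

Lemma misE f y : mis f y = (\sum_z w f y (~~ y) z) / \sum_z (w f y true z + w f y false z).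
Proof. by rewrite /mis /cPr Prmis PrYs. Qed.

Lemma excl_lin f y z : is_pmf f -> exclusion f ->
  w f y (~~ y) z = mis f y * (w f y true z + w f y false z).
Proof.
move=> [f0 _] ex.
have w0 : forall a b, 0 <= w f a b z by move=> a b; apply: f0.
have [s0|sp] := eqVneq (w f y true z + w f y false z) 0.
  rewrite s0 mulr0.
  have := w0 y true; have := w0 y false; case: y s0 => /= s0 *; lra.
have spos : 0 < Pr f (evI (evYs y) (evZ z)).
  rewrite PrYsZ lt_neqAle eq_sym sp /=; apply: addr_ge0; apply: w0.
have := ex z y spos; rewrite mis_xE => <-.
by rewrite divfK.
Qed.

Lemma p_lin f z : is_pmf f -> exclusion f -> in_supp f z ->
  p f z = (1 - mis f true) * pstar f z + mis f false * (1 - pstar f z).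
Proof.
move=> pm ex sz.
have e1 := excl_lin f true z pm ex; have e0 := excl_lin f false z pm ex.
move: e1 e0 sz; rewrite /in_supp pE pstarE PrZ /= => e1 e0 sz.
have q0 : w f true true z + w f true false z + w f false true z + w f false false z != 0.
  by rewrite gt_eqF.
move: q0 e1 e0.
move: (w f true true z) (w f true false z) (w f false true z) (w f false false z)
  (mis f true) (mis f false) => A B C D a b q0 e1 e0.
have -> : A + C = (1 - a) * (A + B) + b * (A + B + C + D - (A + B)) by nra.
by field.
Qed.

Lemma mis01 f y : is_pmf f -> 0 <= mis f y <= 1.
Proof. by case=> f0 _; apply: cPr_01. Qed.

Lemma pstar01 f z : is_pmf f -> 0 <= pstar f z <= 1.
Proof. by case=> f0 _; apply: cPr_01. Qed.

Lemma p01 f z : is_pmf f -> 0 <= p f z <= 1.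
Proof. by case=> f0 _; apply: cPr_01. Qed.

Lemma plow_ge f c : c <= 1 -> (forall z, 0 < Pr f (evZ z) -> c <= p f z) -> c <= p_low f.
Proof.
move=> c1 H; rewrite /p_low; elim/big_ind: _ => //.
by move=> x y hx hy; rewrite le_min hx hy.
Qed.

Lemma pup_le f c : 0 <= c -> (forall z, 0 < Pr f (evZ z) -> p f z <= c) -> p_up f <= c.
Proof.
move=> c0 H; rewrite /p_up; elim/big_ind: _ => //.
by move=> x y hx hy; rewrite ge_max hx hy.
Qed.

Lemma plow_le f z : 0 < Pr f (evZ z) -> p_low f <= p f z.
Proof. by move=> hz; rewrite /p_low (bigD1 z) //= ge_min lexx. Qed.

Lemma pup_ge f z : 0 < Pr f (evZ z) -> p f z <= p_up f.
Proof. by move=> hz; rewrite /p_up (bigD1 z) //= le_max lexx. Qed.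

Lemma part1 f z : is_pmf f -> exclusion f -> degree_misreport f -> boundary f ->
  in_supp f z -> L1 f z <= pstar f z <= U1 f z.
Proof.
move=> pm ex dg [bu bl] sz.
have /andP[a0 a1] := mis01 f true pm; have /andP[b0 b1] := mis01 f false pm.
move: dg; rewrite /degree_misreport => dg.
have hl : mis f false <= p_low f.
  apply: plow_ge => // z' sz'; rewrite (p_lin f _ pm ex sz').
  have /andP[s0 s1] := pstar01 f z' pm; nra.
have hu : p_up f <= 1 - mis f true.
  apply: pup_le; first lra.
  move=> z' sz'; rewrite (p_lin f _ pm ex sz').
  have /andP[s0 s1] := pstar01 f z' pm; nra.
have /andP[s0 s1] := pstar01 f z pm.
have pl := p_lin f _ pm ex sz.
rewrite /L1 /U1; apply/andP; split.
  rewrite ler_pdivrMr; last lra.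
  rewrite pl; nra.
rewrite ler_pdivlMr // pl; nra.
Qed.

Definition r f (y : bool) z := Pr f (evI (evY y) (evZ z)).

Definition Qlo f : law R Z := fun t =>
  let k := p_low f / (1 - p_low f) in
  match t.1 with
  | (true, true) => r f true t.2 - r f false t.2 * k
  | (true, false) => 0
  | (false, true) => r f false t.2 * k
  | (false, false) => r f false t.2
  end.

Definition Qup f : law R Z := fun t =>
  let k := (1 - p_up f) / p_up f in
  match t.1 with
  | (true, true) => r f true t.2
  | (true, false) => r f true t.2 * k
  | (false, true) => 0
  | (false, false) => r f false t.2 - r f true t.2 * k
  end.

Lemma PrZ_r f z : Pr f (evZ z) = r f true z + r f false z.
Proof. rewrite PrZ /r !PrYZ; ring. Qed.

Lemma pE_r f z : p f z = r f true z / Pr f (evZ z).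
Proof. by rewrite pE /r PrYZ. Qed.

Lemma same_plow f g : same_observed f g -> p_low f = p_low g /\ p_up f = p_up g.
Proof.
move=> so.
have hz : forall z, Pr f (evZ z) = Pr g (evZ z).
  by move=> z; rewrite !PrZ_r /r !so.
have hp : forall z, p f z = p g z.
  by move=> z; rewrite !pE_r hz /r so.
split; apply: eq_big => z //; by rewrite ?hz ?hp.
Qed.

Lemma r_ge0 f y z : is_pmf f -> 0 <= r f y z.
Proof. by case=> f0 _; apply: Pr_ge0. Qed.

Lemma supp0 f z : is_pmf f -> ~~ (0 < Pr f (evZ z)) -> r f true z = 0 /\ r f false z = 0.
Proof.
move=> pm; rewrite PrZ_r => h.
have := r_ge0 f true z pm; have := r_ge0 f false z pm.
move: h; rewrite -leNgt => h *; split; lra.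
Qed.

Lemma sum_Pr_f f : \sum_z (r f true z + r f false z) = \sum_t f t.
Proof. by rewrite sum_outcome; apply: eq_bigr => z _; rewrite -PrZ_r PrZ. Qed.

Lemma plow_ge0 f : is_pmf f -> 0 <= p_low f.
Proof.
move=> pm; apply: plow_ge => // z _; by have /andP[] := p01 f z pm.
Qed.

Lemma pup_le1 f : is_pmf f -> p_up f <= 1.
Proof.
move=> pm; apply: pup_le => // z _; by have /andP[] := p01 f z pm.
Qed.

Lemma ratio (x y k : R) : x != 0 -> y != 0 -> 0 <= k ->
  x * k / (x * k + x) = y * k / (y * k + y).
Proof.
move=> x0 y0 k0.
have k1 : k + 1 != 0 by rewrite gt_eqF // ltr_wpDl.
have -> : x * k + x = x * (k + 1) by ring.
have -> : y * k + y = y * (k + 1) by ring.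
by field; rewrite x0 y0 k1.
Qed.

Lemma sum_pos f y z : is_pmf f -> 0 < r f y z -> \sum_z' r f y z' != 0.
Proof.
move=> pm h; rewrite gt_eqF // (bigD1 z) //=.
by apply: ltr_wpDr => //; apply: sumr_ge0 => z' _; apply: r_ge0.
Qed.


Lemma obs_lo f : same_observed (Qlo f) f.
Proof.
move=> y z; rewrite [LHS]PrYZ /w /Qlo /=; case: y => /=; rewrite -/(r f _ z); ring.
Qed.

Lemma Qlo_adm f : is_pmf f -> boundary f ->
  [/\ is_pmf (Qlo f), exclusion (Qlo f), degree_misreport (Qlo f) & boundary (Qlo f)].
Proof.
move=> pm [bu bl].
have pl0 := plow_ge0 f pm.
set k := p_low f / (1 - p_low f).
have k0 : 0 <= k by apply: divr_ge0; lra.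
have hk : k * (1 - p_low f) = p_low f by rewrite /k divfK // subr_eq0 gt_eqF.
have [ql qu] := same_plow _ _ (obs_lo f).
have pmQ : is_pmf (Qlo f).
  split.
    case=> [[[] []] z] /=; rewrite /Qlo /= -/k; try by [].
    - have [sz|nsz] := boolP (0 < Pr f (evZ z)).
        have := plow_le f z sz; rewrite pE_r ler_pdivlMr // PrZ_r => h.
        have r0 := r_ge0 f false z pm; have r1 := r_ge0 f true z pm.
        rewrite /r in h r0 r1 *; nra.
      by have [-> ->] := supp0 f z pm nsz; rewrite mul0r subr0.
    - by apply: mulr_ge0 => //; apply: r_ge0.
    - exact: r_ge0.
  case: pm => _ <-; rewrite [LHS]sum_outcome -(sum_Pr_f f); apply: eq_bigr => z _.
  rewrite /w /Qlo /=; ring.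
split => //.
- move=> z [] hpos.
    rewrite mis_xE misE /w /Qlo /=.
    by rewrite big1 // !mul0r.
  move: hpos; rewrite PrYsZ mis_xE misE /w /Qlo /= -/k => hpos.
  have rz : r f false z != 0.
    apply/eqP => e; move: hpos; rewrite e mul0r add0r ltxx //.
  have rz' : 0 < r f false z by rewrite lt_neqAle eq_sym rz r_ge0.
  rewrite big_split /= -big_distrl /=.
  by apply: ratio => //; apply: (sum_pos f false z pm).
- rewrite /degree_misreport.
  have -> : mis (Qlo f) true = 0.
    by rewrite misE /w /Qlo /= big1 // mul0r.
  rewrite add0r; by have /andP[] := mis01 (Qlo f) false pmQ.
- by rewrite /boundary ql qu.
Qed.

Lemma pstar_lo f z : is_pmf f -> boundary f -> in_supp f z ->
  pstar (Qlo f) z = L1 f z.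
Proof.
move=> pm [bu bl] sz.
rewrite pstarE /w /Qlo /= /L1 pE_r.
have [ql _] := same_plow _ _ (obs_lo f).
have -> : Pr (Qlo f) (evZ z) = Pr f (evZ z).
  by rewrite !PrZ_r /r !obs_lo.
move: sz; rewrite /in_supp PrZ_r => sz.
have h1 : 1 - p_low f != 0 by rewrite subr_eq0 gt_eqF.
have h2 : r f true z + r f false z != 0 by rewrite gt_eqF.
by field; rewrite h1 h2.
Qed.

Lemma ratio2 (x y k : R) : x != 0 -> y != 0 -> 0 <= k ->
  x * k / (x + x * k) = y * k / (y + y * k).
Proof. by move=> *; rewrite [x + _]addrC [y + _]addrC (@ratio x y k). Qed.

Lemma obs_up f : same_observed (Qup f) f.
Proof.
move=> y z; rewrite [LHS]PrYZ /w /Qup /=; case: y => /=; rewrite -/(r f _ z); ring.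
Qed.

Lemma Qup_adm f : is_pmf f -> boundary f ->
  [/\ is_pmf (Qup f), exclusion (Qup f), degree_misreport (Qup f) & boundary (Qup f)].
Proof.
move=> pm [bu bl].
have pu1 := pup_le1 f pm.
set k := (1 - p_up f) / p_up f.
have k0 : 0 <= k by apply: divr_ge0; lra.
have hk : k * p_up f = 1 - p_up f by rewrite /k divfK // gt_eqF.
have [ql qu] := same_plow _ _ (obs_up f).
have pmQ : is_pmf (Qup f).
  split.
    case=> [[[] []] z] /=; rewrite /Qup /= -/k; try by [].
    - exact: r_ge0.
    - by apply: mulr_ge0 => //; apply: r_ge0.
    - have [sz|nsz] := boolP (0 < Pr f (evZ z)).
        have := pup_ge f z sz; rewrite pE_r ler_pdivrMr // PrZ_r => h.
        have r0 := r_ge0 f false z pm; have r1 := r_ge0 f true z pm.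
        rewrite /r in h r0 r1 *; nra.
      by have [-> ->] := supp0 f z pm nsz; rewrite mul0r subr0.
  case: pm => _ <-; rewrite [LHS]sum_outcome -(sum_Pr_f f); apply: eq_bigr => z _.
  rewrite /w /Qup /=; ring.
split => //.
- move=> z [] hpos; last first.
    rewrite mis_xE misE /w /Qup /=.
    by rewrite big1 // !mul0r.
  move: hpos; rewrite PrYsZ mis_xE misE /w /Qup /= -/k => hpos.
  have rz : r f true z != 0.
    apply/eqP => e; move: hpos; rewrite e mul0r add0r ltxx //.
  have rz' : 0 < r f true z by rewrite lt_neqAle eq_sym rz r_ge0.
  rewrite big_split /= -big_distrl /=.
  by apply: ratio2 => //; apply: (sum_pos f true z pm).
- rewrite /degree_misreport.
  have -> : mis (Qup f) false = 0.
    by rewrite misE /w /Qup /= big1 // mul0r.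
  rewrite addr0; by have /andP[] := mis01 (Qup f) true pmQ.
- by rewrite /boundary ql qu.
Qed.

Lemma pstar_up f z : is_pmf f -> boundary f -> in_supp f z ->
  pstar (Qup f) z = U1 f z.
Proof.
move=> pm [bu bl] sz.
rewrite pstarE /w /Qup /= /U1 pE_r.
have -> : Pr (Qup f) (evZ z) = Pr f (evZ z).
  by rewrite !PrZ_r /r !obs_up.
move: sz; rewrite /in_supp PrZ_r => sz.
have h1 : p_up f != 0 by rewrite gt_eqF.
have h2 : r f true z + r f false z != 0 by rewrite gt_eqF.
by field; rewrite h1 h2.
Qed.

End Aux.

Theorem proposition1 (R : realFieldType) (Xt : Type) (Z : finType)
  (P : Xt -> law R Z) :
  admissible P ->
  forall (xt : Xt) (z : Z), in_supp (P xt) z ->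
    (L1 (P xt) z <= pstar (P xt) z <= U1 (P xt) z)
    /\ (exists Q : Xt -> law R Z,
          [/\ admissible Q, (forall xt', same_observed (Q xt') (P xt'))
            & pstar (Q xt) z = L1 (P xt) z])
    /\ (exists Q : Xt -> law R Z,
          [/\ admissible Q, (forall xt', same_observed (Q xt') (P xt'))
            & pstar (Q xt) z = U1 (P xt) z]).
Proof.
move=> adm xt z sz.
have [pm ex dg bd] := adm xt.
split; first exact: (part1 _ _ _ _ pm ex dg bd sz).
split.
  exists (fun xt' => Qlo _ _ (P xt')); split.
  - move=> xt'; have [pm' _ _ bd'] := adm xt'; exact: (Qlo_adm _ _ _ pm' bd').
  - move=> xt'; exact: (obs_lo _ _ (P xt')).
  - exact: (pstar_lo _ _ _ _ pm bd sz).
exists (fun xt' => Qup _ _ (P xt')); split.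
- move=> xt'; have [pm' _ _ bd'] := adm xt'; exact: (Qup_adm _ _ _ pm' bd').
- move=> xt'; exact: (obs_up _ _ (P xt')).
- exact: (pstar_up _ _ _ _ pm bd sz).
Qed.
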